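(* Let $H$ be a complex infinite-dimensional separable Hilbert space, and let $(f_n)_{n=1}^\infty$ and $(g_n)_{n=1}^\infty$ be Bessel sequences in $H$ with optimal Bessel bounds $B$ and $D$ and analysis operators $U$ and $V$, respectively. Suppose $I-V^*U$ is a compact operator on $H$. Then there exist finite sequences $(x_n)_{n=1}^k$ and $(y_n)_{n=1}^l$ in $H$ such that $(x_n)_{n=1}^k\cup(f_n)_{n=1}^\infty$ is a frame for $H$ with optimal upper frame bound $B$, and $(y_n)_{n=1}^l\cup(g_n)_{n=1}^\infty$ is a frame for $H$ with optimal upper frame bound $D$.
   Context: A Bessel sequence $(f_n)$ in $H$: there is $B>0$ with $\sum_n|\langle x,f_n\rangle|^2\le B\|x\|^2$ for all $x$; the optimal Bessel bound is the infimum of all such $B$. A frame additionally has a lower bound $A>0$ with $A\|x\|^2\le\sum_n|\langle x,f_n\rangle|^2$; the optimal upper frame bound is the infimum of upper bounds. The analysis operator is $U:H\to\ell^2$, $Ux=(\langle x,f_n\rangle)_n$. The notation $(x_n)_{n=1}^k\cup(f_n)_{n=1}^\infty$ denotes the sequence $x_1,\dots,x_k,f_1,f_2,\dots$. *)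

(* Defs.v *)
From Stdlib Require Import Reals Lra List.
Open Scope R_scope.

Record C := mkC { Re : R ; Im : R }.
Definition C0 : C := mkC 0 0.
Definition C1 : C := mkC 1 0.
Definition Cadd (a b : C) : C := mkC (Re a + Re b) (Im a + Im b).
Definition Cmul (a b : C) : C :=
  mkC (Re a * Re b - Im a * Im b) (Re a * Im b + Im a * Re b).
Definition Cconj (a : C) : C := mkC (Re a) (- Im a).
Definition Cnorm2 (a : C) : R := Re a * Re a + Im a * Im a.

(** * Complex Hilbert spaces (inner product linear in the first argument) *)
Record CHilbert := {
  vec :> Type;
  hzero : vec;
  hadd : vec -> vec -> vec;
  hopp : vec -> vec;
  hscal : C -> vec -> vec;
  hinner : vec -> vec -> C;
  hadd_assoc : forall x y z, hadd x (hadd y z) = hadd (hadd x y) z;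
  hadd_comm : forall x y, hadd x y = hadd y x;
  hadd_zero : forall x, hadd x hzero = x;
  hadd_opp : forall x, hadd x (hopp x) = hzero;
  hscal_assoc : forall a b x, hscal a (hscal b x) = hscal (Cmul a b) x;
  hscal_one : forall x, hscal C1 x = x;
  hscal_distr_v : forall a x y, hscal a (hadd x y) = hadd (hscal a x) (hscal a y);
  hscal_distr_s : forall a b x, hscal (Cadd a b) x = hadd (hscal a x) (hscal b x);
  hinner_conj : forall x y, hinner y x = Cconj (hinner x y);
  hinner_add_l : forall x y z, hinner (hadd x y) z = Cadd (hinner x z) (hinner y z);
  hinner_scal_l : forall a x y, hinner (hscal a x) y = Cmul a (hinner x y);
  hinner_pos : forall x, 0 <= Re (hinner x x);
  hinner_def : forall x, Re (hinner x x) = 0 -> x = hzero;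
  hcomplete : forall u : nat -> vec,
    (forall eps, eps > 0 -> exists N, forall m n, (N <= m)%nat -> (N <= n)%nat ->
        sqrt (Re (hinner (hadd (u m) (hopp (u n))) (hadd (u m) (hopp (u n))))) < eps) ->
    exists l, forall eps, eps > 0 -> exists N, forall n, (N <= n)%nat ->
        sqrt (Re (hinner (hadd (u n) (hopp l)) (hadd (u n) (hopp l)))) < eps
}.

Arguments hzero {c}.
Arguments hadd {c}.
Arguments hopp {c}.
Arguments hscal {c}.
Arguments hinner {c}.

Section HilbertDefs.
Variable H : CHilbert.

Definition hsub (x y : H) : H := hadd x (hopp y).
Definition hnorm (x : H) : R := sqrt (Re (hinner x x)).

Definition hconverges (u : nat -> H) (l : H) : Prop :=
  forall eps, eps > 0 -> exists N, forall n, (N <= n)%nat -> hnorm (hsub (u n) l) < eps.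

Definition separable : Prop :=
  exists d : nat -> H, forall x eps, eps > 0 -> exists n, hnorm (hsub x (d n)) < eps.

Fixpoint lincomb (n : nat) (c : nat -> C) (v : nat -> H) : H :=
  match n with
  | O => hzero
  | S m => hadd (lincomb m c v) (hscal (c m) (v m))
  end.

Definition infinite_dimensional : Prop :=
  forall (n : nat) (v : nat -> H), exists x : H, forall c : nat -> C, x <> lincomb n c v.

Definition bessel_bound (f : nat -> H) (B : R) : Prop :=
  B > 0 /\ forall x : H, exists l,
    infinite_sum (fun n => Cnorm2 (hinner x (f n))) l /\ l <= B * (hnorm x)^2.

Definition is_bessel (f : nat -> H) : Prop := exists B, bessel_bound f B.

Definition lower_frame_bound (f : nat -> H) (A : R) : Prop :=
  A > 0 /\ forall x : H, exists l,
    infinite_sum (fun n => Cnorm2 (hinner x (f n))) l /\ A * (hnorm x)^2 <= l.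

Definition is_frame (f : nat -> H) : Prop :=
  (exists A, lower_frame_bound f A) /\ (exists B, bessel_bound f B).

Definition is_glb (E : R -> Prop) (m : R) : Prop :=
  (forall x, E x -> m <= x) /\ (forall m', (forall x, E x -> m' <= x) -> m' <= m).

Definition optimal_bessel_bound (f : nat -> H) (B : R) : Prop :=
  is_glb (bessel_bound f) B.

Definition optimal_upper_frame_bound (f : nat -> H) (B : R) : Prop :=
  is_glb (bessel_bound f) B.

Definition analysis (f : nat -> H) (x : H) : nat -> C := fun n => hinner x (f n).

(** synthesis (adjoint of the analysis operator of g): V^* c = sum_n c_n g_n,
    the series converging in norm to y *)
Definition synthesis_is (g : nat -> H) (c : nat -> C) (y : H) : Prop :=
  hconverges (fun N => lincomb N c g) y.

Definition hbounded (u : nat -> H) : Prop := exists M, forall n, hnorm (u n) <= M.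

Definition linear_op (T : H -> H) : Prop :=
  (forall x y, T (hadd x y) = hadd (T x) (T y)) /\
  (forall a x, T (hscal a x) = hscal a (T x)).

Definition compact_op (T : H -> H) : Prop :=
  linear_op T /\
  forall u : nat -> H, hbounded u ->
    exists (phi : nat -> nat) (l : H),
      (forall n, (phi n < phi (S n))%nat) /\ hconverges (fun n => T (u (phi n))) l.

Definition prepend (xs : list H) (f : nat -> H) : nat -> H :=
  fun n => if Nat.ltb n (length xs) then nth n xs hzero else f (n - length xs)%nat.

End HilbertDefs.

Arguments hsub {H}.
Arguments hnorm {H}.

(* Main.v *)
From Stdlib Require Import Reals Lra Lia List ClassicalEpsilon Classical.
Require Import Defs.
Open Scope R_scope.

Lemma C_ext (a b : C) : Re a = Re b -> Im a = Im b -> a = b.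
Proof. destruct a, b; simpl; intros; subst; reflexivity. Qed.

Section Alg.
Context {H : CHilbert}.

Definition N (x : H) : R := Re (hinner x x).
Definition rs (l : R) (x : H) : H := hscal (mkC l 0) x.

Lemma hadd_0_l (x : H) : hadd hzero x = x.
Proof. rewrite hadd_comm. apply hadd_zero. Qed.

Lemma hadd_cancel (a : H) : hadd a a = a -> a = hzero.
Proof.
  intro E. rewrite <- (hadd_opp _ a). rewrite <- E at 2.
  rewrite <- hadd_assoc, hadd_opp, hadd_zero. reflexivity.
Qed.

Lemma hopp_unique (a b : H) : hadd a b = hzero -> b = hopp a.
Proof.
  intro E. rewrite <- (hadd_zero _ b). rewrite <- (hadd_opp _ a).
  rewrite hadd_assoc, (hadd_comm _ b a), E, hadd_0_l. reflexivity.
Qed.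

Lemma hinner_zero_l (y : H) : hinner hzero y = C0.
Proof.
  assert (E : hinner (hadd hzero hzero) y = hinner hzero y) by (rewrite hadd_zero; auto).
  rewrite hinner_add_l in E. apply C_ext; simpl.
  - apply (f_equal Re) in E. simpl in E. lra.
  - apply (f_equal Im) in E. simpl in E. lra.
Qed.

Lemma hinner_zero_r (y : H) : hinner y hzero = C0.
Proof. rewrite hinner_conj, hinner_zero_l. apply C_ext; simpl; ring. Qed.

Lemma hinner_opp_l (a b : H) :
  hinner (hopp a) b = mkC (- Re (hinner a b)) (- Im (hinner a b)).
Proof.
  assert (E : hinner (hadd a (hopp a)) b = C0) by (rewrite hadd_opp; apply hinner_zero_l).
  rewrite hinner_add_l in E. apply C_ext; simpl.
  - apply (f_equal Re) in E. simpl in E. lra.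
  - apply (f_equal Im) in E. simpl in E. lra.
Qed.

Lemma hinner_add_r (a b c : H) :
  hinner a (hadd b c) = Cadd (hinner a b) (hinner a c).
Proof.
  rewrite hinner_conj, hinner_add_l, (hinner_conj _ b a), (hinner_conj _ c a).
  apply C_ext; simpl; ring.
Qed.

Lemma hinner_opp_r (a b : H) :
  hinner a (hopp b) = mkC (- Re (hinner a b)) (- Im (hinner a b)).
Proof.
  rewrite hinner_conj, hinner_opp_l, (hinner_conj _ b a). apply C_ext; simpl; ring.
Qed.

Lemma hinner_scal_r (c : C) (a b : H) :
  hinner a (hscal c b) = Cmul (Cconj c) (hinner a b).
Proof.
  rewrite hinner_conj, hinner_scal_l, (hinner_conj _ b a). apply C_ext; simpl; ring.
Qed.

Lemma Re_sym (a b : H) : Re (hinner b a) = Re (hinner a b).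
Proof. rewrite hinner_conj. reflexivity. Qed.
Lemma Im_sym (a b : H) : Im (hinner b a) = - Im (hinner a b).
Proof. rewrite hinner_conj. reflexivity. Qed.

Lemma N_nonneg (x : H) : 0 <= N x.
Proof. apply hinner_pos. Qed.

Lemma Im_self (x : H) : Im (hinner x x) = 0.
Proof. pose proof (Im_sym x x). lra. Qed.

Lemma hnorm_sq (x : H) : (hnorm x)^2 = N x.
Proof. unfold hnorm. apply pow2_sqrt. apply N_nonneg. Qed.

End Alg.

Hint Rewrite @hinner_add_l @hinner_add_r @hinner_opp_l @hinner_opp_r
  @hinner_scal_l @hinner_scal_r @hinner_zero_l @hinner_zero_r : ip.

Ltac ipsimpl := unfold hsub, N, rs in *; autorewrite with ip in *; simpl in *.

Section Alg2.
Context {H : CHilbert}.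

Lemma N_sub (a b : H) : N (hsub a b) = N a - 2 * Re (hinner a b) + N b.
Proof. ipsimpl. rewrite (Re_sym a b). lra. Qed.

Lemma N_zero (x : H) : N x = 0 -> x = hzero.
Proof. apply hinner_def. Qed.

Lemma N_rs (l : R) (x : H) : N (rs l x) = l * l * N x.
Proof. ipsimpl. rewrite Im_self. ring. Qed.

Lemma Re_rs_l (l : R) (x y : H) : Re (hinner (rs l x) y) = l * Re (hinner x y).
Proof. ipsimpl. ring. Qed.

Lemma CS (a b : H) : Rabs (Re (hinner a b)) <= sqrt (N a) * sqrt (N b).
Proof.
  set (r := Re (hinner a b)).
  assert (Hq : forall l, 0 <= N a - 2 * l * r + l * l * N b).
  { intro l. pose proof (N_nonneg (hsub a (rs l b))) as P.
    rewrite N_sub, N_rs in P. unfold rs in P. ipsimpl. unfold r. nra. }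
  destruct (Req_dec (N b) 0) as [Hb|Hb].
  - assert (r = 0).
    { destruct (Req_dec r 0); auto.
      specialize (Hq ((N a + 1) / (2 * r))). rewrite Hb in Hq.
      assert (2 * ((N a + 1) / (2 * r)) * r = N a + 1) by (field; auto).
      pose proof (N_nonneg a). nra. }
    rewrite H0, Rabs_R0. apply Rmult_le_pos; apply sqrt_pos.
  - pose proof (N_nonneg b). pose proof (N_nonneg a).
    assert (Hbp : N b > 0) by lra.
    specialize (Hq (r / N b)).
    assert (r * r <= N a * N b).
    { assert (E : N a - 2 * (r / N b) * r + r / N b * (r / N b) * N b = N a - r * r / N b)
        by (field; lra).
      rewrite E in Hq.
      assert (r * r / N b <= N a) by lra.
      apply (Rmult_le_compat_r (N b)) in H2; [|lra].
      replace (r * r / N b * N b) with (r*r) in H2 by (field; lra). lra. }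
    rewrite <- sqrt_mult by lra. rewrite <- sqrt_Rsqr_abs. apply sqrt_le_1_alt.
    unfold Rsqr. lra.
Qed.

Lemma N_sub_le (u v : H) : N u <= 2 * N v + 2 * N (hsub u v).
Proof.
  pose proof (N_nonneg (hsub u (hadd v v))).
  pose proof (Re_sym u v). ipsimpl. lra.
Qed.

Lemma N_tri2 (a b l : H) : N (hsub a b) <= 2 * N (hsub a l) + 2 * N (hsub b l).
Proof.
  pose proof (N_nonneg (hadd (hsub a l) (hsub b l))).
  pose proof (Re_sym a b); pose proof (Re_sym a l); pose proof (Re_sym b l). ipsimpl. lra.
Qed.

Lemma Re_le (u d : H) : Re (hinner u d) <= N u + N d / 4.
Proof.
  pose proof (N_nonneg (hsub (hadd u u) d)).
  pose proof (Re_sym u d). ipsimpl. lra.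
Qed.

End Alg2.

Fixpoint rsum (n : nat) (s : nat -> R) : R :=
  match n with O => 0 | S m => rsum m s + s m end.

Lemma rsum_S (n : nat) (s : nat -> R) : rsum (S n) s = sum_f_R0 s n.
Proof. induction n; simpl in *; [ring|]. rewrite <- IHn. simpl. ring. Qed.

Lemma isum_nonneg (s : nat -> R) l : (forall n, 0 <= s n) -> infinite_sum s l -> 0 <= l.
Proof.
  intros Hs Hl. pose proof (sum_incr s 0 l Hl Hs). simpl in H. specialize (Hs 0%nat). lra.
Qed.

Lemma rsum_le_lim (s : nat -> R) l n : (forall k, 0 <= s k) -> infinite_sum s l -> rsum n s <= l.
Proof.
  intros Hs Hl. destruct n.
  - simpl. eapply isum_nonneg; eauto.
  - rewrite rsum_S. apply sum_incr; auto.
Qed.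

Lemma term_le_lim (s : nat -> R) l k : (forall k, 0 <= s k) -> infinite_sum s l -> s k <= l.
Proof.
  intros Hs Hl. pose proof (rsum_le_lim s l (S k) Hs Hl). simpl in H.
  assert (0 <= rsum k s).
  { clear Hl H. induction k; simpl. lra. pose proof (Hs k). lra. }
  lra.
Qed.

Lemma isum_ext (s t : nat -> R) l : (forall n, s n = t n) -> infinite_sum s l -> infinite_sum t l.
Proof.
  intros E Hl eps He. destruct (Hl eps He) as [M HM]. exists M. intros n Hn.
  rewrite <- (sum_eq s t n) by (intros; auto). auto.
Qed.

Lemma isum_scal (s : nat -> R) l c : infinite_sum s l -> infinite_sum (fun n => c * s n) (c * l).
Proof.
  intros Hl eps He.
  destruct (Hl (eps / (Rabs c + 1))) as [M HM].
  { apply Rdiv_lt_0_compat; auto. pose proof (Rabs_pos c); lra. }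
  exists M. intros n Hn. specialize (HM n Hn).
  assert (E : sum_f_R0 (fun n => c * s n) n = c * sum_f_R0 s n).
  { clear. induction n; simpl; auto. rewrite IHn. ring. }
  rewrite E. unfold Rdist in *. replace (c * sum_f_R0 s n - c * l) with (c * (sum_f_R0 s n - l)) by ring.
  rewrite Rabs_mult. pose proof (Rabs_pos c). pose proof (Rabs_pos (sum_f_R0 s n - l)).
  assert (Rabs c * Rabs (sum_f_R0 s n - l) <= Rabs c * (eps / (Rabs c + 1))) by (apply Rmult_le_compat_l; lra).
  assert (Rabs c * (eps / (Rabs c + 1)) < eps).
  { apply (Rmult_lt_reg_r (Rabs c + 1)). lra. field_simplify; lra. }
  lra.
Qed.

Lemma isum_shift (s : nat -> R) l : infinite_sum (fun n => s (S n)) l -> infinite_sum s (s O + l).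
Proof.
  intros Hl eps He. destruct (Hl eps He) as [M HM]. exists (S M). intros n Hn.
  destruct n; [lia|].
  assert (E : sum_f_R0 s (S n) = s O + sum_f_R0 (fun k => s (S k)) n).
  { clear. induction n; [simpl; ring|].
    replace (sum_f_R0 s (S (S n))) with (sum_f_R0 s (S n) + s (S (S n))) by reflexivity.
    rewrite IHn. simpl. ring. }
  rewrite E. unfold Rdist in *. replace (s O + sum_f_R0 (fun k => s (S k)) n - (s O + l)) with
     (sum_f_R0 (fun k => s (S k)) n - l) by ring. apply HM. lia.
Qed.

Lemma isum_zero : infinite_sum (fun _ => 0) 0.
Proof.
  intros eps He. exists O. intros n _. unfold Rdist.
  assert (sum_f_R0 (fun _ => 0) n = 0) by (induction n; simpl; auto; lra).
  rewrite H. rewrite Rminus_0_r, Rabs_R0. lra.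
Qed.

Definition Sum (s : nat -> R) : R := epsilon (inhabits 0) (fun l => infinite_sum s l).

Lemma Sum_spec (s : nat -> R) : (exists l, infinite_sum s l) -> infinite_sum s (Sum s).
Proof. intro E. unfold Sum. apply epsilon_spec. exact E. Qed.

Lemma Sum_eq (s : nat -> R) l : infinite_sum s l -> Sum s = l.
Proof. intro E. eapply uniqueness_sum; [apply Sum_spec; eauto | exact E]. Qed.

Lemma Cnorm2_nonneg (a : C) : 0 <= Cnorm2 a.
Proof. unfold Cnorm2. nra. Qed.

Lemma Cnorm2_zero (a : C) : Cnorm2 a <= 0 -> a = C0.
Proof. unfold Cnorm2; intro. destruct a as [x y]; simpl in *. apply C_ext; simpl; nra. Qed.

Section Bes.
Context {H : CHilbert}.

Definition Sa (a : nat -> H) (x : H) : R := Sum (fun n => Cnorm2 (hinner x (a n))).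
Definition summable (a : nat -> H) : Prop :=
  forall x : H, exists l, infinite_sum (fun n => Cnorm2 (hinner x (a n))) l.

Lemma Sa_spec a x : summable a -> infinite_sum (fun n => Cnorm2 (hinner x (a n))) (Sa a x).
Proof. intro S. apply Sum_spec. apply S. Qed.

Lemma Sa_nonneg a x : summable a -> 0 <= Sa a x.
Proof. intro S. eapply isum_nonneg; [|apply Sa_spec; auto]. intro; apply Cnorm2_nonneg. Qed.

Lemma coord_le a x k : summable a -> Cnorm2 (hinner x (a k)) <= Sa a x.
Proof.
  intro S. apply (term_le_lim (fun n => Cnorm2 (hinner x (a n)))); [|apply Sa_spec; auto].
  intro; apply Cnorm2_nonneg.
Qed.

Lemma bessel_summable a B0 : bessel_bound H a B0 -> summable a.
Proof. intros [_ Hb] x. destruct (Hb x) as [l [Hl _]]. eauto. Qed.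

Lemma bessel_Sa a B0 x : bessel_bound H a B0 -> Sa a x <= B0 * N x.
Proof.
  intros Hb. pose proof (bessel_summable a B0 Hb) as S. destruct Hb as [_ Hb].
  destruct (Hb x) as [l [Hl Hle]]. unfold Sa. rewrite (Sum_eq _ l Hl).
  rewrite hnorm_sq in Hle. exact Hle.
Qed.

Lemma opt_nonneg a B : is_glb (bessel_bound H a) B -> 0 <= B.
Proof. intros [_ G]. apply G. intros x [Hx _]. lra. Qed.

Lemma opt_Sa a B x : is_bessel H a -> is_glb (bessel_bound H a) B -> Sa a x <= B * N x.
Proof.
  intros [B0 HB0] [L G]. pose proof (bessel_summable a B0 HB0) as S.
  destruct (Req_dec (N x) 0) as [Z|Z].
  - apply N_zero in Z. subst x.
    assert (Sa a hzero = 0).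
    { unfold Sa. apply Sum_eq. eapply isum_ext; [|apply isum_zero].
      intro n. simpl. rewrite hinner_zero_l. unfold Cnorm2, C0; simpl; ring. }
    rewrite H0. unfold N. rewrite hinner_zero_l. simpl. lra.
  - assert (Np : N x > 0) by (pose proof (N_nonneg x); lra).
    assert (Sa a x / N x <= B).
    { apply G. intros B1 HB1. pose proof (bessel_Sa a B1 x HB1).
      apply (Rmult_le_reg_r (N x)); auto. field_simplify; lra. }
    apply (Rmult_le_compat_r (N x)) in H0; [|lra].
    replace (Sa a x / N x * N x) with (Sa a x) in H0 by (field; lra). lra.
Qed.

Lemma Cnorm2_rs_r (l : R) (x y : H) : Cnorm2 (hinner x (rs l y)) = l * l * Cnorm2 (hinner x y).
Proof. unfold Cnorm2. ipsimpl. ring. Qed.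

Lemma Cnorm2_rs_l (l : R) (x y : H) : Cnorm2 (hinner (rs l x) y) = l * l * Cnorm2 (hinner x y).
Proof. unfold Cnorm2. ipsimpl. ring. Qed.

Lemma Sa_rs a l x : summable a -> Sa a (rs l x) = l * l * Sa a x.
Proof.
  intro S. unfold Sa at 1. apply Sum_eq.
  eapply isum_ext; [|apply isum_scal; apply Sa_spec; auto].
  intro n. simpl. rewrite Cnorm2_rs_l. ring.
Qed.

End Bes.

Lemma amgm_C (a b : C) t : t > 0 -> Rabs (Re (Cmul a b)) <= (t * Cnorm2 a + Cnorm2 b / t) / 2.
Proof.
  intro ht. destruct a as [a1 a2], b as [b1 b2]. unfold Cnorm2, Cmul; simpl.
  assert (F : forall u v, t * (u * u) - 2 * u * v + v * v / t = / t * ((t * u - v) * (t * u - v)))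
    by (intros; field; lra).
  assert (G : forall u v, 0 <= / t * ((t * u - v) * (t * u - v))).
  { intros. apply Rmult_le_pos. apply Rlt_le, Rinv_0_lt_compat; lra. apply Rle_0_sqr. }
  pose proof (F a1 b1); pose proof (G a1 b1); pose proof (F a1 (-b1)); pose proof (G a1 (-b1)).
  pose proof (F a2 b2); pose proof (G a2 b2); pose proof (F a2 (-b2)); pose proof (G a2 (-b2)).
  set (Y := t * (a1 * a1 + a2 * a2) + (b1 * b1 + b2 * b2) / t).
  assert (-Y <= 2 * (a1 * b1 - a2 * b2) <= Y).
  { unfold Y, Rdiv in *. split; lra. }
  apply Rabs_le. lra.
Qed.

Lemma rsum_abs n h : Rabs (rsum n h) <= rsum n (fun k => Rabs (h k)).
Proof.
  induction n; simpl. rewrite Rabs_R0; lra.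
  eapply Rle_trans; [apply Rabs_triang|]. lra.
Qed.

Lemma rsum_le n h1 h2 : (forall k, h1 k <= h2 k) -> rsum n h1 <= rsum n h2.
Proof. intro E. induction n; simpl. lra. specialize (E n). lra. Qed.

Lemma rsum_lin n u v t : rsum n (fun k => (t * u k + v k / t) / 2) = (t * rsum n u + rsum n v / t) / 2.
Proof.
  induction n; simpl. unfold Rdiv; ring. rewrite IHn. unfold Rdiv. ring.
Qed.

Lemma Cnorm2_conj z : Cnorm2 (Cconj z) = Cnorm2 z.
Proof. unfold Cnorm2, Cconj; simpl. ring. Qed.

Section Weak.
Context {H : CHilbert}.

Lemma lincomb_Re (c : nat -> C) (g : nat -> H) y n :
  Re (hinner (lincomb H n c g) y) = rsum n (fun k => Re (Cmul (c k) (hinner (g k) y))).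
Proof.
  induction n; simpl. rewrite hinner_zero_l. reflexivity.
  rewrite hinner_add_l, hinner_scal_l. simpl. rewrite IHn. reflexivity.
Qed.

Lemma weak (f g : nat -> H) (T : H -> H)
  (Hsyn : forall x, synthesis_is H g (analysis H f x) (hsub x (T x)))
  (Sf : summable f) (Sg : summable g) x y t (ht : t > 0) :
  Rabs (Re (hinner (hsub x (T x)) y)) <= (t * Sa f x + Sa g y / t) / 2.
Proof.
  set (bnd := (t * Sa f x + Sa g y / t) / 2).
  set (c := analysis H f x).
  assert (Hn : forall n, Rabs (Re (hinner (lincomb H n c g) y)) <= bnd).
  { intro n. rewrite lincomb_Re. eapply Rle_trans; [apply rsum_abs|].
    eapply Rle_trans.
    { apply rsum_le. intro k. apply (amgm_C _ _ t ht). }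
    rewrite rsum_lin. unfold bnd.
    assert (rsum n (fun k => Cnorm2 (c k)) <= Sa f x).
    { apply rsum_le_lim; [intro; apply Cnorm2_nonneg|]. apply Sa_spec; auto. }
    assert (rsum n (fun k => Cnorm2 (hinner (g k) y)) <= Sa g y).
    { apply rsum_le_lim; [intro; apply Cnorm2_nonneg|].
      eapply isum_ext; [|apply (Sa_spec g y Sg)]. intro k. simpl.
      rewrite (hinner_conj _ (g k) y). rewrite Cnorm2_conj. reflexivity. }
    assert (/ t > 0) by (apply Rinv_0_lt_compat; lra).
    unfold Rdiv in *. nra. }
  apply Rnot_lt_le. intro Hc.
  set (z := hsub x (T x)) in *.
  set (d := Rabs (Re (hinner z y)) - bnd).
  assert (dpos : d > 0) by (unfold d; lra).
  pose proof (sqrt_pos (N y)) as sp.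
  destruct (Hsyn x (d / (sqrt (N y) + 1))) as [M HM].
  { apply Rdiv_lt_0_compat; lra. }
  specialize (HM M (le_n _)). fold c in HM. fold z in HM.
  set (zM := lincomb H M c g) in *.
  pose proof (CS (hsub zM z) y) as Hcs.
  assert (E : Re (hinner z y) = Re (hinner zM y) - Re (hinner (hsub zM z) y)).
  { unfold hsub. rewrite hinner_add_l, hinner_opp_l. simpl. ring. }
  assert (Hw : sqrt (N (hsub zM z)) * sqrt (N y) <= d / (sqrt (N y) + 1) * sqrt (N y)).
  { apply Rmult_le_compat_r; auto. unfold hnorm in HM. fold (N (hsub zM z)) in HM. lra. }
  assert (d / (sqrt (N y) + 1) * sqrt (N y) < d).
  { apply (Rmult_lt_reg_r (sqrt (N y) + 1)); [lra|].
    replace (d / (sqrt (N y) + 1) * sqrt (N y) * (sqrt (N y) + 1)) with (d * sqrt (N y)) by (field; lra).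
    nra. }
  specialize (Hn M). fold zM in Hn.
  assert (Rabs (Re (hinner z y)) <= Rabs (Re (hinner zM y)) + Rabs (Re (hinner (hsub zM z) y))).
  { rewrite E. unfold Rminus. eapply Rle_trans; [apply Rabs_triang|]. rewrite Rabs_Ropp. lra. }
  unfold d in *. lra.
Qed.

End Weak.

Lemma Rabs_le_between a b : Rabs a <= b -> -b <= a <= b.
Proof. intro E. pose proof (Rle_abs a). pose proof (Rle_abs (-a)). rewrite Rabs_Ropp in *. lra. Qed.

Section Core.
Context {H : CHilbert}.

Lemma lin_sub (T : H -> H) : linear_op H T -> forall x y, T (hsub x y) = hsub (T x) (T y).
Proof.
  intros [Ha Hs] x y. unfold hsub. rewrite Ha. f_equal.
  apply hopp_unique. rewrite <- Ha, hadd_opp.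
  apply hadd_cancel. rewrite <- Ha, hadd_zero. reflexivity.
Qed.

Lemma core_U (f g : nat -> H) (T : H -> H) D0
  (Hsyn : forall x, synthesis_is H g (analysis H f x) (hsub x (T x)))
  (Sf : summable f) (Hg : bessel_bound H g D0) x y :
  N (hsub x y) <= 2 * N (hsub (T x) (T y)) + 4 * D0 * (Sa f x + Sa f y).
Proof.
  assert (Sg : summable g) by (eapply bessel_summable; eauto).
  assert (D0p : D0 > 0) by (apply Hg).
  assert (Id : forall d', Re (hinner (hsub x y) d') =
     Re (hinner (hsub x (T x)) d') - Re (hinner (hsub y (T y)) d') + Re (hinner (hsub (T x) (T y)) d')).
  { intro d'. ipsimpl. lra. }
  set (d := hsub x y). specialize (Id d).
  assert (W : forall z, Rabs (Re (hinner (hsub z (T z)) d)) <= 2 * D0 * Sa f z + N d / 8).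
  { intro z. pose proof (weak f g T Hsyn Sf Sg z d (4 * D0)) as Wz.
    pose proof (bessel_Sa g D0 d Hg).
    assert (Sa g d / (4 * D0) <= N d / 4).
    { unfold Rdiv. apply (Rmult_le_reg_r (4 * D0)). lra.
      rewrite Rmult_assoc, Rinv_l, Rmult_1_r by lra. lra. }
    eapply Rle_trans. apply Wz. lra. lra. }
  pose proof (W x) as Wx. pose proof (W y) as Wy.
  apply Rabs_le_between in Wx. apply Rabs_le_between in Wy.
  pose proof (Re_le (hsub (T x) (T y)) d).
  assert (N d = Re (hinner d d)) by reflexivity. change (hsub x y) with d in Id. lra.
Qed.

Lemma core_V (f g : nat -> H) (T : H -> H) B0
  (Hsyn : forall x, synthesis_is H g (analysis H f x) (hsub x (T x)))
  (Hf : bessel_bound H f B0) (Sg : summable g) (Tl : linear_op H T) x y :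
  N (hsub x y) <= 2 * N (hsub (T x) (T y)) + 4 * B0 * (Sa g x + Sa g y).
Proof.
  assert (Sf : summable f) by (eapply bessel_summable; eauto).
  assert (B0p : B0 > 0) by (apply Hf).
  set (d := hsub x y).
  assert (Id : forall u, Re (hinner d d) =
     Re (hinner (hsub d u) x) - Re (hinner (hsub d u) y) + Re (hinner u d)).
  { intro u. unfold d. ipsimpl. lra. }
  specialize (Id (T d)).
  assert (W : forall z, Rabs (Re (hinner (hsub d (T d)) z)) <= N d / 8 + 2 * B0 * Sa g z).
  { intro z. pose proof (weak f g T Hsyn Sf Sg d z (/ (4 * B0))) as Wz.
    pose proof (bessel_Sa f B0 d Hf).
    assert (/ (4 * B0) * Sa f d <= N d / 4).
    { apply (Rmult_le_reg_l (4 * B0)). lra.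
      rewrite <- Rmult_assoc, Rinv_r, Rmult_1_l by lra. lra. }
    eapply Rle_trans. apply Wz. apply Rinv_0_lt_compat; lra.
    unfold Rdiv. rewrite Rinv_inv. lra. }
  pose proof (W x) as Wx. pose proof (W y) as Wy.
  apply Rabs_le_between in Wx. apply Rabs_le_between in Wy.
  pose proof (Re_le (T d) d).
  assert (ETd : T d = hsub (T x) (T y)) by (apply lin_sub; auto).
  rewrite ETd in Id, Wx, Wy, H0.
  assert (N d = Re (hinner d d)) by reflexivity. change (hsub x y) with d. lra.
Qed.

End Core.

Lemma incr_ge (phi : nat -> nat) : (forall n, (phi n < phi (S n))%nat) -> forall n, (n <= phi n)%nat.
Proof. intros I n. induction n. lia. specialize (I n). lia. Qed.

Lemma incr_mono (phi : nat -> nat) : (forall n, (phi n < phi (S n))%nat) -> forall n m, (n < m)%nat -> (phi n < phi m)%nat.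
Proof. intros I n m Hnm. induction Hnm. apply I. specialize (I m). lia. Qed.

Section Cpt.
Context {H : CHilbert}.

Lemma hnorm_lt (w : H) e : e > 0 -> N w < e * e -> hnorm w < e.
Proof.
  intros He Hw. unfold hnorm. fold (N w). rewrite <- (sqrt_square e) by lra.
  apply sqrt_lt_1_alt. split. apply N_nonneg. auto.
Qed.

Lemma hnorm_lt_inv (w : H) e : hnorm w < e -> N w < e * e.
Proof.
  intro Hw. rewrite <- hnorm_sq. simpl. assert (0 <= hnorm w) by apply sqrt_pos. nra.
Qed.

Lemma N_sub_sym (x y : H) : N (hsub x y) = N (hsub y x).
Proof. rewrite !N_sub, (Re_sym x y). ring. Qed.

Variable a : nat -> H.
Variable Ba : R.
Hypothesis HBa : bessel_bound H a Ba.
Variable T : H -> H.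
Hypothesis Tc : forall u : nat -> H, hbounded H u ->
    exists (phi : nat -> nat) (l : H),
      (forall n, (phi n < phi (S n))%nat) /\ hconverges H (fun n => T (u (phi n))) l.
Variables c1 c2 : R.
Hypothesis c1p : 0 <= c1.
Hypothesis c2p : 0 <= c2.
Hypothesis Hcore : forall x y, N (hsub x y) <= c1 * N (hsub (T x) (T y)) + c2 * (Sa a x + Sa a y).

Lemma Sa_a_summ : summable a.
Proof. eapply bessel_summable; eauto. Qed.

Lemma conv_seq (u : nat -> H) :
  (forall n, N (u n) <= 1) ->
  (forall eps, eps > 0 -> exists M, forall n, (M <= n)%nat -> Sa a (u n) < eps) ->
  exists (phi : nat -> nat) (xs : H),
    (forall eps, eps > 0 -> exists M, forall n, (M <= n)%nat -> N (hsub (u (phi n)) xs) < eps) /\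
    (forall k, hinner xs (a k) = C0).
Proof.
  intros Hb HS.
  assert (Hbd : hbounded H u).
  { exists 1. intro n. unfold hnorm. rewrite <- sqrt_1. apply sqrt_le_1_alt. apply Hb. }
  destruct (Tc u Hbd) as [phi [l [Iphi Hconv]]].
  set (v := fun n => u (phi n)).
  assert (Cauchy : forall eps, eps > 0 -> exists M, forall m n, (M <= m)%nat -> (M <= n)%nat ->
            sqrt (Re (hinner (hadd (v m) (hopp (v n))) (hadd (v m) (hopp (v n))))) < eps).
  { intros eps He.
    set (dl := eps * eps / (4 * c1 + 2 * c2 + 1)).
    assert (dlp : dl > 0) by (unfold dl; apply Rdiv_lt_0_compat; nra).
    destruct (Hconv (sqrt dl)) as [M1 HM1]. apply sqrt_lt_R0; auto.
    destruct (HS dl dlp) as [M2 HM2].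
    exists (Nat.max M1 M2). intros m n Hm Hn.
    change (hnorm (hsub (v m) (v n)) < eps). apply hnorm_lt; auto.
    pose proof (Hcore (v m) (v n)) as Hc.
    pose proof (N_tri2 (T (v m)) (T (v n)) l).
    assert (N (hsub (T (v m)) l) < dl).
    { pose proof (hnorm_lt_inv _ _ (HM1 m ltac:(lia))). rewrite sqrt_sqrt in H1 by lra. exact H1. }
    assert (N (hsub (T (v n)) l) < dl).
    { pose proof (hnorm_lt_inv _ _ (HM1 n ltac:(lia))). rewrite sqrt_sqrt in H2 by lra. exact H2. }
    assert (Sa a (v m) < dl) by (apply HM2; pose proof (incr_ge phi Iphi m); lia).
    assert (Sa a (v n) < dl) by (apply HM2; pose proof (incr_ge phi Iphi n); lia).
    assert (N (hsub (v m) (v n)) <= (4 * c1 + 2 * c2) * dl).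
    { pose proof (N_nonneg (hsub (T (v m)) (T (v n)))).
      assert (c1 * N (hsub (T (v m)) (T (v n))) <= c1 * (4 * dl)) by (apply Rmult_le_compat_l; lra).
      assert (c2 * (Sa a (v m) + Sa a (v n)) <= c2 * (2 * dl)) by (apply Rmult_le_compat_l; lra).
      lra. }
    assert ((4 * c1 + 2 * c2) * dl < eps * eps).
    { unfold dl. apply (Rmult_lt_reg_r (4 * c1 + 2 * c2 + 1)). lra.
      replace ((4 * c1 + 2 * c2) * (eps * eps / (4 * c1 + 2 * c2 + 1)) * (4 * c1 + 2 * c2 + 1))
        with ((4 * c1 + 2 * c2) * (eps * eps)) by (field; lra). nra. }
    lra. }
  destruct (hcomplete H v Cauchy) as [xs Hxs].
  exists phi, xs. split.
  - intros eps He. destruct (Hxs (sqrt eps)) as [M HM]. apply sqrt_lt_R0; auto.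
    exists M. intros n Hn. pose proof (hnorm_lt_inv _ _ (HM n Hn)).
    rewrite sqrt_sqrt in H0 by lra. exact H0.
  - intro k. apply Cnorm2_zero. apply Rnot_lt_le. intro G.
    set (gm := Cnorm2 (hinner xs (a k))) in *.
    assert (Bap : Ba > 0) by apply HBa.
    destruct (Hxs (sqrt (gm / (8 * Ba)))) as [M1 HM1].
    { apply sqrt_lt_R0. apply Rdiv_lt_0_compat; lra. }
    destruct (HS (gm / 8)) as [M2 HM2]. lra.
    set (n := Nat.max M1 M2).
    pose proof (hnorm_lt_inv _ _ (HM1 n ltac:(lia))) as E1.
    rewrite sqrt_sqrt in E1 by (apply Rlt_le, Rdiv_lt_0_compat; lra).
    change (N (hsub (v n) xs) < gm / (8 * Ba)) in E1.
    assert (E2 : Sa a (v n) < gm / 8) by (apply HM2; pose proof (incr_ge phi Iphi n); unfold n in *; lia).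
    pose proof (coord_le a (v n) k Sa_a_summ) as C1.
    pose proof (coord_le a (hsub xs (v n)) k Sa_a_summ) as C2.
    pose proof (bessel_Sa a Ba (hsub xs (v n)) HBa) as C3.
    rewrite N_sub_sym in C3.
    assert (Ba * N (hsub (v n) xs) <= Ba * (gm / (8 * Ba))) by (apply Rmult_le_compat_l; lra).
    replace (Ba * (gm / (8 * Ba))) with (gm / 8) in H0 by (field; lra).
    assert (gm <= 2 * Cnorm2 (hinner (v n) (a k)) + 2 * Cnorm2 (hinner (hsub xs (v n)) (a k))).
    { unfold gm, Cnorm2. ipsimpl.
      set (X := Re (hinner xs (a k))). set (Y := Im (hinner xs (a k))).
      set (p := Re (hinner (v n) (a k))). set (q := Im (hinner (v n) (a k))).
      pose proof (Rle_0_sqr (X - 2 * p)). pose proof (Rle_0_sqr (Y - 2 * q)). unfold Rsqr in *. nra. }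
    lra.
Qed.

Lemma no_ON_seq (E : nat -> H) :
  (forall n, N (E n) = 1) -> (forall n m, n <> m -> Re (hinner (E n) (E m)) = 0) ->
  (forall n, Sa a (E n) = 0) -> False.
Proof.
  intros HN HO HS.
  assert (Hbd : hbounded H E).
  { exists 1. intro n. unfold hnorm. fold (N (E n)). rewrite HN, sqrt_1. lra. }
  destruct (Tc E Hbd) as [phi [l [Iphi Hconv]]].
  set (dl := 1 / (2 * c1 + 1)).
  assert (dlp : dl > 0) by (unfold dl; apply Rdiv_lt_0_compat; lra).
  destruct (Hconv (sqrt dl)) as [M HM]. apply sqrt_lt_R0; auto.
  pose proof (hnorm_lt_inv _ _ (HM M (le_n _))) as A1.
  pose proof (hnorm_lt_inv _ _ (HM (S M) (le_S _ _ (le_n _)))) as A2.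
  rewrite sqrt_sqrt in A1, A2 by lra.
  pose proof (Hcore (E (phi M)) (E (phi (S M)))) as Hc.
  rewrite !HS in Hc. rewrite N_sub, !HN, HO in Hc by (specialize (Iphi M); lia).
  pose proof (N_tri2 (T (E (phi M))) (T (E (phi (S M)))) l).
  assert (c1 * N (hsub (T (E (phi M))) (T (E (phi (S M))))) <= c1 * (4 * dl)) by (apply Rmult_le_compat_l; lra).
  assert (c1 * (4 * dl) < 2).
  { unfold dl. apply (Rmult_lt_reg_r (2 * c1 + 1)). lra.
    replace (c1 * (4 * (1 / (2 * c1 + 1))) * (2 * c1 + 1)) with (4 * c1) by (field; lra). lra. }
  lra.
Qed.

End Cpt.

Section Fin.
Context {H : CHilbert}.

Definition inK (f : nat -> H) (z : H) : Prop := forall k, hinner z (f k) = C0.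
Definition ONK (f : nat -> H) (n : nat) (e : nat -> H) : Prop :=
  (forall i, (i < n)%nat -> inK f (e i) /\ N (e i) = 1) /\
  (forall i j, (i < n)%nat -> (j < n)%nat -> i <> j -> hinner (e i) (e j) = C0).

Lemma self_C1 (x : H) : N x = 1 -> hinner x x = C1.
Proof. intro E. apply C_ext. exact E. apply Im_self. Qed.

Lemma lincomb_orth (c : nat -> C) (e : nat -> H) v m :
  (forall i, (i < m)%nat -> hinner (e i) v = C0) -> hinner (lincomb H m c e) v = C0.
Proof.
  induction m; intro Hv; simpl. apply hinner_zero_l.
  rewrite hinner_add_l, hinner_scal_l, IHm by (intros; apply Hv; lia).
  rewrite (Hv m) by lia. apply C_ext; simpl; ring.
Qed.

Lemma lincomb_coef f (c : nat -> C) (e : nat -> H) n (Ho : ONK f n e) m i :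
  (m <= n)%nat -> (i < n)%nat ->
  hinner (lincomb H m c e) (e i) = if Nat.ltb i m then c i else C0.
Proof.
  induction m; intros Hm Hi; simpl. apply hinner_zero_l.
  rewrite hinner_add_l, hinner_scal_l, IHm by lia.
  destruct (Nat.eq_dec i m) as [->|Hne].
  - rewrite Nat.ltb_irrefl. replace (Nat.ltb m (S m)) with true by (symmetry; apply Nat.ltb_lt; lia).
    rewrite self_C1 by (apply (proj1 Ho); lia). apply C_ext; simpl; ring.
  - rewrite (proj2 Ho m i) by lia.
    destruct (Nat.ltb_spec i m); destruct (Nat.leb_spec i m); try destruct (Nat.ltb_spec i (S m)); try lia;
      apply C_ext; simpl; ring.
Qed.

Lemma bessel_id f (e : nat -> H) n (Ho : ONK f n e) (x : H) m :
  (m <= n)%nat ->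
  N (hsub x (lincomb H m (fun i => hinner x (e i)) e)) =
  N x - rsum m (fun i => Cnorm2 (hinner x (e i))).
Proof.
  induction m; intro Hm; simpl.
  - unfold N. ipsimpl. ring.
  - set (p := lincomb H m (fun i => hinner x (e i)) e) in *.
    specialize (IHm ltac:(lia)).
    assert (Hpe : hinner p (e m) = C0).
    { unfold p. rewrite (lincomb_coef f _ e n Ho) by lia. rewrite Nat.ltb_irrefl. reflexivity. }
    assert (Hep : hinner (e m) p = C0).
    { rewrite hinner_conj, Hpe. apply C_ext; simpl; ring. }
    assert (Hee : hinner (e m) (e m) = C1) by (apply self_C1; apply (proj1 Ho); lia).
    rewrite N_sub in IHm.
    pose proof (Re_sym x (e m)). pose proof (Im_sym x (e m)).
    pose proof (Re_sym x p). pose proof (Im_sym x p).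
    unfold N, Cnorm2 in *. ipsimpl. rewrite ?Hpe, ?Hep, ?Hee. simpl.
    rewrite H0, H1. lra.
Qed.

End Fin.

Section Max.
Context {H : CHilbert}.

Lemma rs_C0 (l : R) (z v : H) : hinner z v = C0 -> hinner (rs l z) v = C0.
Proof. intro E. unfold rs. rewrite hinner_scal_l, E. apply C_ext; simpl; ring. Qed.

Lemma Sa_inK (f : nat -> H) z : inK f z -> Sa f z = 0.
Proof.
  intro Hz. unfold Sa. apply Sum_eq. eapply isum_ext; [|apply isum_zero].
  intro k. simpl. rewrite Hz. unfold Cnorm2, C0; simpl; ring.
Qed.

Lemma normalize (z : H) : z <> hzero -> exists l, N (rs l z) = 1.
Proof.
  intro Hz. assert (Np : N z > 0).
  { pose proof (N_nonneg z). destruct (Req_dec (N z) 0) as [E|E]. apply N_zero in E. contradiction. lra. }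
  exists (/ sqrt (N z)). rewrite N_rs.
  pose proof (sqrt_lt_R0 _ Np). pose proof (sqrt_sqrt (N z) ltac:(lra)).
  rewrite <- H1 at 3. field. lra.
Qed.

Definition F_seq (nxt : nat -> (nat -> H) -> H) : nat -> nat -> H :=
  fix F m := match m with
             | O => fun _ => hzero
             | S m' => fun i => if Nat.eqb i m' then nxt m' (F m') else F m' i
             end.

Lemma F_stable nxt m i : (i < m)%nat -> F_seq nxt m i = F_seq nxt (S i) i.
Proof.
  induction m; intro Hi. lia.
  simpl. destruct (Nat.eqb_spec i m). subst. simpl. rewrite Nat.eqb_refl. reflexivity.
  apply IHm. lia.
Qed.

Lemma exists_maximal (f : nat -> H) Bf (HBf : bessel_bound H f Bf) (T : H -> H)
  (Tc : forall u : nat -> H, hbounded H u ->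
    exists (phi : nat -> nat) (l : H),
      (forall n, (phi n < phi (S n))%nat) /\ hconverges H (fun n => T (u (phi n))) l)
  c1 c2 (c1p : 0 <= c1)
  (Hcore : forall x y, N (hsub x y) <= c1 * N (hsub (T x) (T y)) + c2 * (Sa f x + Sa f y)) :
  exists n e, ONK f n e /\
    forall z, inK f z -> (forall i, (i < n)%nat -> hinner z (e i) = C0) -> z = hzero.
Proof.
  apply NNPP. intro Hno.
  assert (Ext : forall n e, exists z, ONK f n e ->
             inK f z /\ N z = 1 /\ forall i, (i < n)%nat -> hinner z (e i) = C0).
  { intros n e. destruct (classic (ONK f n e)) as [Ho|Ho]; [|exists hzero; tauto].
    assert (exists z, inK f z /\ (forall i, (i < n)%nat -> hinner z (e i) = C0) /\ z <> hzero).
    { apply NNPP. intro C. apply Hno. exists n, e. split; auto. intros z Hz Ho'.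
      apply NNPP. intro Hz0. apply C. exists z. auto. }
    destruct H0 as [z [Hz [Ho' Hz0]]]. destruct (normalize z Hz0) as [l Hl].
    exists (rs l z). intros _. split; [|split]; auto.
    - intro k. apply rs_C0. apply Hz.
    - intros i Hi. apply rs_C0. auto. }
  set (nxt := fun n e => epsilon (inhabits hzero) (fun z => ONK f n e ->
             inK f z /\ N z = 1 /\ forall i, (i < n)%nat -> hinner z (e i) = C0)).
  assert (Hnxt : forall n e, ONK f n e ->
             inK f (nxt n e) /\ N (nxt n e) = 1 /\ forall i, (i < n)%nat -> hinner (nxt n e) (e i) = C0).
  { intros n e. unfold nxt. apply epsilon_spec. apply Ext. }
  set (F := F_seq nxt).
  assert (FON : forall m, ONK f m (F m)).
  { induction m.
    - split; intros; lia.
    - destruct (Hnxt m (F m) IHm) as [N1 [N2 N3]].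
      assert (Fv : forall i, F (S m) i = if Nat.eqb i m then nxt m (F m) else F m i) by reflexivity.
      split.
      + intros i Hi. rewrite Fv. destruct (Nat.eqb_spec i m). auto. apply (proj1 IHm). lia.
      + intros i j Hi Hj Hij. rewrite !Fv.
        destruct (Nat.eqb_spec i m); destruct (Nat.eqb_spec j m); try lia.
        * apply N3. lia.
        * rewrite hinner_conj, N3 by lia. apply C_ext; simpl; ring.
        * apply (proj2 IHm); lia. }
  set (E := fun i => F (S i) i).
  assert (HE : forall i m, (i < m)%nat -> E i = F m i).
  { intros i m Hi. unfold E, F. symmetry. apply F_stable. auto. }
  apply (no_ON_seq f T Tc c1 c2 c1p Hcore E).
  - intro n. unfold E. apply (proj1 (FON (S n))). lia.
  - intros n m Hnm. rewrite (HE n (S (Nat.max n m))), (HE m (S (Nat.max n m))) by lia.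
    rewrite (proj2 (FON (S (Nat.max n m)))) by lia. reflexivity.
  - intro n. apply Sa_inK. unfold E. apply (proj1 (FON (S n))). lia.
Qed.

End Max.

Lemma rsum_shift (g : nat -> R) k : rsum (S k) g = g O + rsum k (fun i => g (S i)).
Proof. induction k; simpl in *. ring. rewrite IHk. ring. Qed.

Lemma rsum_scal (g : nat -> R) c k : rsum k (fun i => c * g i) = c * rsum k g.
Proof. induction k; simpl. ring. rewrite IHk. ring. Qed.

Lemma rsum_nonneg (g : nat -> R) k : (forall i, 0 <= g i) -> 0 <= rsum k g.
Proof. intro G. induction k; simpl. lra. specialize (G k). lra. Qed.

Lemma rsum_ext_eq (g h : nat -> R) k : (forall i, g i = h i) -> rsum k g = rsum k h.
Proof. intro E. induction k; simpl; auto. rewrite IHk, E. auto. Qed.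

Section Side.
Context {H : CHilbert}.

Definition fsum (x : H) (xs : list H) : R := fold_right (fun v acc => Cnorm2 (hinner x v) + acc) 0 xs.

Lemma prepend_sum (f : nat -> H) (Sf : summable f) x xs :
  infinite_sum (fun m => Cnorm2 (hinner x (prepend H xs f m))) (fsum x xs + Sa f x).
Proof.
  induction xs as [|v xs IH]; simpl.
  - eapply isum_ext; [|rewrite Rplus_0_l; apply Sa_spec; auto].
    intro m. unfold prepend. simpl. rewrite Nat.sub_0_r. reflexivity.
  - rewrite Rplus_assoc. apply isum_shift.
    eapply isum_ext; [|exact IH]. intro m. reflexivity.
Qed.

Lemma fsum_map (x : H) (h : nat -> H) k j :
  fsum x (map h (seq j k)) = rsum k (fun i => Cnorm2 (hinner x (h (j + i)%nat))).
Proof.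
  revert j. induction k; intro j. reflexivity.
  change (fsum x (map h (seq j (S k)))) with (Cnorm2 (hinner x (h j)) + fsum x (map h (seq (S j) k))).
  rewrite IHk, rsum_shift. rewrite Nat.add_0_r. f_equal. apply rsum_ext_eq. intro i. do 3 f_equal. lia.
Qed.

Lemma nth_map_seq (h : nat -> H) k j i d : (i < k)%nat -> nth i (map h (seq j k)) d = h (j + i)%nat.
Proof.
  revert i j. induction k; intros i j Hi. lia. simpl. destruct i. rewrite Nat.add_0_r. reflexivity.
  rewrite IHk by lia. f_equal. lia.
Qed.

Lemma side (f : nat -> H) B (Hf : is_bessel H f) (HB : is_glb (bessel_bound H f) B)
  (Hinf : infinite_dimensional H) (T : H -> H)
  (Tc : forall u : nat -> H, hbounded H u ->
    exists (phi : nat -> nat) (l : H),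
      (forall n, (phi n < phi (S n))%nat) /\ hconverges H (fun n => T (u (phi n))) l)
  c1 c2 (c1p : 0 <= c1) (c2p : 0 <= c2)
  (Hcore : forall x y, N (hsub x y) <= c1 * N (hsub (T x) (T y)) + c2 * (Sa f x + Sa f y)) :
  exists xs, is_frame H (prepend H xs f) /\ optimal_upper_frame_bound H (prepend H xs f) B.
Proof.
  destruct Hf as [Bf HBf]. pose proof (bessel_summable f Bf HBf) as Sf.
  destruct (exists_maximal f Bf HBf T Tc c1 c2 c1p Hcore) as [n [e [Ho Hmax]]].
  pose proof (opt_nonneg f B HB) as B0.
  assert (Bp : B > 0).
  { destruct (Req_dec B 0) as [E|E]; [|lra]. exfalso.
    assert (AK : forall x, inK f x).
    { intros x k. apply Cnorm2_zero. pose proof (coord_le f x k Sf).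
      pose proof (opt_Sa f B x (ex_intro _ Bf HBf) HB). rewrite E in H1. lra. }
    destruct (Hinf n e) as [x Hx].
    set (p := lincomb H n (fun i => hinner x (e i)) e).
    assert (Hq : hsub x p = hzero).
    { apply Hmax. apply AK. intros i Hi. unfold p, hsub.
      rewrite hinner_add_l, hinner_opp_l, (lincomb_coef f _ e n Ho) by lia.
      replace (Nat.ltb i n) with true by (symmetry; apply Nat.ltb_lt; auto).
      apply C_ext; simpl; ring. }
    apply (Hx (fun i => hinner x (e i))). fold p.
    assert (E2 : hadd (hsub x p) p = x).
    { unfold hsub. rewrite <- hadd_assoc, (hadd_comm _ (hopp p) p), hadd_opp, hadd_zero. reflexivity. }
    rewrite Hq, hadd_0_l in E2. symmetry; exact E2. }
  set (s := sqrt B).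
  assert (ss : s * s = B) by (apply sqrt_sqrt; lra).
  assert (sp : s > 0) by (apply sqrt_lt_R0; auto).
  set (xs := map (fun i => rs s (e i)) (seq 0 n)).
  assert (Lxs : length xs = n) by (unfold xs; rewrite length_map, length_seq; auto).
  set (a := prepend H xs f).
  assert (Fs : forall x, fsum x xs = B * rsum n (fun i => Cnorm2 (hinner x (e i)))).
  { intro x. unfold xs. rewrite fsum_map. rewrite <- ss, <- rsum_scal.
    apply rsum_ext_eq. intro i. rewrite Cnorm2_rs_r. reflexivity. }
  assert (Asum : forall x, infinite_sum (fun m => Cnorm2 (hinner x (a m))) (fsum x xs + Sa f x)).
  { intro x. apply prepend_sum; auto. }
  assert (Sa_a : forall x, Sa a x = fsum x xs + Sa f x).
  { intro x. apply Sum_eq. apply Asum. }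
  assert (Sa_ge : forall x, Sa f x <= Sa a x).
  { intro x. rewrite Sa_a, Fs. pose proof (rsum_nonneg (fun i => Cnorm2 (hinner x (e i))) n
      (fun i => Cnorm2_nonneg _)). nra. }
  assert (Upper : forall x, Sa a x <= B * N x).
  { intro x. rewrite Sa_a, Fs.
    set (p := lincomb H n (fun i => hinner x (e i)) e).
    assert (Sq : Sa f (hsub x p) = Sa f x).
    { apply Sum_eq. eapply isum_ext; [|apply (Sa_spec f x Sf)]. intro k. simpl.
      assert (hinner p (f k) = C0).
      { apply lincomb_orth. intros i Hi. apply (proj1 (proj1 Ho i Hi)). }
      unfold hsub. rewrite hinner_add_l, hinner_opp_l, H0. f_equal. apply C_ext; simpl; ring. }
    pose proof (opt_Sa f B (hsub x p) (ex_intro _ Bf HBf) HB).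
    pose proof (bessel_id f e n Ho x n (le_n _)) as BI. fold p in BI.
    rewrite Sq, BI in H0. nra. }
  assert (HBa : bessel_bound H a B).
  { split; auto. intro x. exists (Sa a x). split. rewrite Sa_a. apply Asum.
    rewrite hnorm_sq. apply Upper. }
  exists xs. fold a. split; [split|].
  -
    apply NNPP. intro NL.
    assert (Ex : forall k : nat, exists y, N y = 1 /\ Sa a y < 1 / (INR k + 1)).
    { intro k. pose proof (pos_INR k) as Pk.
      assert (exists x, Sa a x < 1 / (INR k + 1) * N x).
      { apply NNPP. intro C. apply NL. exists (1 / (INR k + 1)). split.
        apply Rdiv_lt_0_compat; lra.
        intro x. exists (Sa a x). split. rewrite Sa_a. apply Asum. rewrite hnorm_sq.
        apply Rnot_lt_le. intro C'. apply C. eauto. }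
      destruct H0 as [x Hx].
      assert (Np : N x > 0).
      { pose proof (Sa_nonneg a x ltac:(eapply bessel_summable; eauto)).
        pose proof (N_nonneg x). destruct (Req_dec (N x) 0) as [Z|Z]. rewrite Z in Hx. lra. lra. }
      assert (x <> hzero). { intro Z. subst x. unfold N in Np. rewrite hinner_zero_l in Np. simpl in Np. lra. }
      destruct (normalize x H0) as [l Hl]. exists (rs l x). split; auto.
      rewrite Sa_rs by (eapply bessel_summable; eauto). rewrite N_rs in Hl.
      assert (0 <= l * l) by nra.
      assert (l * l * Sa a x <= l * l * (1 / (INR k + 1) * N x)) by (apply Rmult_le_compat_l; lra).
      assert (l * l <> 0). { intro Z. rewrite Z in Hl. lra. }
      assert (l * l * Sa a x <> l * l * (1 / (INR k + 1) * N x)).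
      { intro Z. apply Rmult_eq_reg_l in Z; auto. lra. }
      replace (l * l * (1 / (INR k + 1) * N x)) with (1 / (INR k + 1) * (l * l * N x)) in * by ring.
      rewrite Hl in *. lra. }
    set (u := fun k => epsilon (inhabits hzero) (fun y => N y = 1 /\ Sa a y < 1 / (INR k + 1))).
    assert (Hu : forall k, N (u k) = 1 /\ Sa a (u k) < 1 / (INR k + 1)).
    { intro k. unfold u. apply epsilon_spec. apply Ex. }
    assert (Hcore_a : forall x y, N (hsub x y) <= c1 * N (hsub (T x) (T y)) + c2 * (Sa a x + Sa a y)).
    { intros x y. pose proof (Hcore x y). pose proof (Sa_ge x). pose proof (Sa_ge y).
      assert (c2 * (Sa f x + Sa f y) <= c2 * (Sa a x + Sa a y)) by (apply Rmult_le_compat_l; lra). lra. }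
    destruct (conv_seq a B HBa T Tc c1 c2 c1p c2p Hcore_a u) as [phi [xst [Hconv Hcoord]]].
    + intro k. rewrite (proj1 (Hu k)). lra.
    + intros eps He. destruct (archimed_cor1 eps He) as [M [HM M0]].
      exists M. intros k Hk. eapply Rlt_le_trans. apply Hu.
      apply le_INR in Hk. assert (0 < INR M) by (apply lt_0_INR; auto).
      unfold Rdiv. rewrite Rmult_1_l. left. eapply Rle_lt_trans; [|exact HM].
      apply Rinv_le_contravar; lra.
    + destruct (Hconv (1/4)) as [M HM]. lra.
      pose proof (HM M (le_n _)) as HM'.
      pose proof (N_sub_le (u (phi M)) xst). rewrite (proj1 (Hu _)) in H0.
      assert (K : inK f xst).
      { intro k. pose proof (Hcoord (k + n)%nat). unfold a, prepend in H1.
        rewrite Lxs in H1. replace (Nat.ltb (k + n) n) with false in H1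
          by (symmetry; apply Nat.ltb_ge; lia). replace (k + n - n)%nat with k in H1 by lia. auto. }
      assert (O : forall i, (i < n)%nat -> hinner xst (e i) = C0).
      { intros i Hi. pose proof (Hcoord i). unfold a, prepend in H1. rewrite Lxs in H1.
        replace (Nat.ltb i n) with true in H1 by (symmetry; apply Nat.ltb_lt; lia).
        unfold xs in H1. rewrite nth_map_seq in H1 by auto. simpl in H1.
        unfold rs in H1. rewrite hinner_scal_r in H1.
        pose proof (f_equal Re H1) as R1. pose proof (f_equal Im H1) as I1. simpl in R1, I1.
        apply C_ext; simpl.
        - apply (Rmult_eq_reg_l s). nra. lra.
        - apply (Rmult_eq_reg_l s). nra. lra. }
      pose proof (Hmax xst K O). subst xst.
      assert (Z0 : N (@hzero H) = 0) by (unfold N; rewrite hinner_zero_l; reflexivity).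
      rewrite Z0 in H0. lra.
  - exists B. exact HBa.
  - split.
    + intros B' HB'. apply (proj1 HB). split. apply HB'. intro x.
      exists (Sa f x). split. apply Sa_spec; auto. rewrite hnorm_sq.
      pose proof (bessel_Sa a B' x HB'). pose proof (Sa_ge x). lra.
    + intros m' Hm'. apply Hm'. exact HBa.
Qed.

End Side.

Theorem theorem2p4 (H : CHilbert)
  (Hsep : separable H) (Hinf : infinite_dimensional H)
  (f g : nat -> H) (B D : R)
  (Hf : is_bessel H f) (Hg : is_bessel H g)
  (HB : optimal_bessel_bound H f B) (HD : optimal_bessel_bound H g D)
  (Hcpt : exists T : H -> H, compact_op H T /\
            forall x : H, synthesis_is H g (analysis H f x) (hsub x (T x))) :
  exists (xs ys : list H),
    is_frame H (prepend H xs f) /\ optimal_upper_frame_bound H (prepend H xs f) B /\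
    is_frame H (prepend H ys g) /\ optimal_upper_frame_bound H (prepend H ys g) D.
Proof.
  destruct Hcpt as [T [[Tl Tc] Hsyn]].
  pose proof Hf as [Bf HBf]. pose proof Hg as [Bg HBg].
  assert (Sf : summable f) by (eapply bessel_summable; eauto).
  assert (Sg : summable g) by (eapply bessel_summable; eauto).
  assert (Bfp : Bf > 0) by apply HBf. assert (Bgp : Bg > 0) by apply HBg.
  destruct (side f B Hf HB Hinf T Tc 2 (4 * Bg)) as [xs Hxs]; try lra.
  { intros x y. apply (core_U f g T Bg Hsyn Sf HBg). }
  destruct (side g D Hg HD Hinf T Tc 2 (4 * Bf)) as [ys Hys]; try lra.
  { intros x y. apply (core_V f g T Bf Hsyn HBf Sg Tl). }
  exists xs, ys. tauto.
Qed.
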